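(* Let $Y\subset\mathbb{R}^n$ be open, and let $\omega\colon Y\to\mathbb{R}^n$, $f\colon Y\to\mathbb{R}^n$, $F\colon Y\to\mathbb{R}$, $H\colon Y\to\mathbb{R}^{n\times m}$, $g\colon Y\to\mathbb{R}^m$, $f^{\mathrm{num}}\colon Y\times Y\to\mathbb{R}^n$, $H^{\mathrm{num}}\colon Y\times Y\to\mathbb{R}^{n\times m}$ be arbitrary with $f^{\mathrm{num}}(u,u)=f(u)$ and $H^{\mathrm{num}}(u,u)=H(u)$. Then the following are equivalent: (A) there exists $F^{\mathrm{num}}\colon Y\times Y\to\mathbb{R}$ with $F^{\mathrm{num}}(u,u)=F(u)$ such that for all $u_-,u_0,u_+\in Y$, $$\omega(u_0)\cdot\Big(f^{\mathrm{num}}(u_0,u_+)-f^{\mathrm{num}}(u_-,u_0)+\tfrac12H^{\mathrm{num}}(u_0,u_+)\big(g(u_+)-g(u_0)\big)+\tfrac12H^{\mathrm{num}}(u_-,u_0)\big(g(u_0)-g(u_-)\big)\Big)\ \ge\ F^{\mathrm{num}}(u_0,u_+)-F^{\mathrm{num}}(u_-,u_0);$$ (B) for all $u_-,u_+\in Y$, $$[\![\omega]\!]\cdot f^{\mathrm{num}}(u_-,u_+)-\{\{\omega\}\}\cdot H^{\mathrm{num}}(u_-,u_+)\,[\![g]\!]\ \le\ [\![\omega\cdot f-F]\!].$$ Moreover, there exists a consistent $F^{\mathrm{num}}$ with equality in (A) for all triples iff (B) holds with equality for all pairs, and then $$F^{\mathrm{num}}=\{\{F\}\}+\{\{\omega\}\}\cdot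 f^{\mathrm{num}}-\{\{\omega\cdot f\}\}-\tfrac14[\![\omega]\!]\cdot H^{\mathrm{num}}[\![g]\!].$$
   Context: For a function $a$ on $Y$ and states $u_\pm$: $\{\{a\}\}=\tfrac12(a(u_-)+a(u_+))$, $[\![a]\!]=a(u_+)-a(u_-)$; numerical fluxes are evaluated at $(u_-,u_+)$. *)

(* Defs.v *)
From HB Require Import structures.
From mathcomp Require Import all_boot all_order all_algebra.
From mathcomp Require Import all_classical all_reals all_analysis.
Set Implicit Arguments. Unset Strict Implicit. Unset Printing Implicit Defensive.
Import Order.TTheory GRing.Theory Num.Theory.
Import numFieldNormedType.Exports.
Local Open Scope ring_scope.

Definition dotv {R : realType} {n : nat} (a b : 'cV[R]_n) : R :=
  \sum_(i < n) a i 0 * b i 0.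

Definition lhsA {R : realType} {n m : nat}
  (omega : 'cV[R]_n -> 'cV[R]_n) (g : 'cV[R]_n -> 'cV[R]_m)
  (fnum : 'cV[R]_n -> 'cV[R]_n -> 'cV[R]_n)
  (Hnum : 'cV[R]_n -> 'cV[R]_n -> 'M[R]_(n, m))
  (um u0 up : 'cV[R]_n) : R :=
  dotv (omega u0)
    (fnum u0 up - fnum um u0
     + 2^-1 *: (Hnum u0 up *m (g up - g u0))
     + 2^-1 *: (Hnum um u0 *m (g u0 - g um))).

Definition lhsB {R : realType} {n m : nat}
  (omega : 'cV[R]_n -> 'cV[R]_n) (g : 'cV[R]_n -> 'cV[R]_m)
  (fnum : 'cV[R]_n -> 'cV[R]_n -> 'cV[R]_n)
  (Hnum : 'cV[R]_n -> 'cV[R]_n -> 'M[R]_(n, m))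
  (um up : 'cV[R]_n) : R :=
  dotv (omega up - omega um) (fnum um up)
  - dotv (2^-1 *: (omega um + omega up)) (Hnum um up *m (g up - g um)).

Definition rhsB {R : realType} {n : nat}
  (omega f : 'cV[R]_n -> 'cV[R]_n) (F : 'cV[R]_n -> R) (um up : 'cV[R]_n) : R :=
  (dotv (omega up) (f up) - F up) - (dotv (omega um) (f um) - F um).

Definition Fnum_formula {R : realType} {n m : nat}
  (omega f : 'cV[R]_n -> 'cV[R]_n) (F : 'cV[R]_n -> R)
  (g : 'cV[R]_n -> 'cV[R]_m)
  (fnum : 'cV[R]_n -> 'cV[R]_n -> 'cV[R]_n)
  (Hnum : 'cV[R]_n -> 'cV[R]_n -> 'M[R]_(n, m))
  (um up : 'cV[R]_n) : R :=
  2^-1 * (F um + F up)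
  + dotv (2^-1 *: (omega um + omega up)) (fnum um up)
  - 2^-1 * (dotv (omega um) (f um) + dotv (omega up) (f up))
  - 4^-1 * dotv (omega up - omega um) (Hnum um up *m (g up - g um)).

(* Main.v *)
Require Import Defs.
From HB Require Import structures.
From mathcomp Require Import all_boot all_order all_algebra.
From mathcomp Require Import all_classical all_reals all_analysis.
Import Order.TTheory GRing.Theory Num.Theory.
Import numFieldNormedType.Exports.
Local Open Scope ring_scope.
Local Open Scope classical_set_scope.


From mathcomp Require Import ring lra.

Section Dot.
Variables (R : realType) (n : nat).
Implicit Types a b c : 'cV[R]_n.
Lemma dotvDl a b c : dotv (a + b) c = dotv a c + dotv b c.
Proof. rewrite /dotv -big_split; apply: eq_bigr => i _; rewrite mxE mulrDl. by []. Qed.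
Lemma dotvDr a b c : dotv a (b + c) = dotv a b + dotv a c.
Proof. rewrite /dotv -big_split; apply: eq_bigr => i _; rewrite mxE mulrDr. by []. Qed.
Lemma dotvNl a c : dotv (- a) c = - dotv a c.
Proof. rewrite /dotv -sumrN; apply: eq_bigr => i _; rewrite mxE mulNr. by []. Qed.
Lemma dotvNr a c : dotv a (- c) = - dotv a c.
Proof. rewrite /dotv -sumrN; apply: eq_bigr => i _; rewrite mxE mulrN. by []. Qed.
Lemma dotvZl k a c : dotv (k *: a) c = k * dotv a c.
Proof. rewrite /dotv mulr_sumr; apply: eq_bigr => i _; rewrite mxE mulrA. by []. Qed.
Lemma dotvZr k a c : dotv a (k *: c) = k * dotv a c.
Proof. rewrite /dotv mulr_sumr; apply: eq_bigr => i _; rewrite mxE mulrCA. by []. Qed.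
Lemma dotv0r a : dotv a 0 = 0.
Proof. by rewrite -(scale0r (0 : 'cV[R]_n)) dotvZr mul0r. Qed.
End Dot.

Ltac dsimpl := rewrite ?(dotvDl, dotvDr, dotvNl, dotvNr, dotvZl, dotvZr).

Theorem mainTheorem6 (R : realType) (n m : nat) (Y : set 'cV[R]_n) (hY : open Y)
  (omega f : 'cV[R]_n -> 'cV[R]_n) (F : 'cV[R]_n -> R)
  (H : 'cV[R]_n -> 'M[R]_(n, m)) (g : 'cV[R]_n -> 'cV[R]_m)
  (fnum : 'cV[R]_n -> 'cV[R]_n -> 'cV[R]_n)
  (Hnum : 'cV[R]_n -> 'cV[R]_n -> 'M[R]_(n, m))
  (hf : forall u, Y u -> fnum u u = f u)
  (hH : forall u, Y u -> Hnum u u = H u) :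
  ((exists Fnum : 'cV[R]_n -> 'cV[R]_n -> R,
      (forall u, Y u -> Fnum u u = F u) /\
      (forall um u0 up, Y um -> Y u0 -> Y up ->
         Fnum u0 up - Fnum um u0 <= lhsA omega g fnum Hnum um u0 up))
   <->
   (forall um up, Y um -> Y up ->
      lhsB omega g fnum Hnum um up <= rhsB omega f F um up))
  /\
  ((exists Fnum : 'cV[R]_n -> 'cV[R]_n -> R,
      (forall u, Y u -> Fnum u u = F u) /\
      (forall um u0 up, Y um -> Y u0 -> Y up ->
         lhsA omega g fnum Hnum um u0 up = Fnum u0 up - Fnum um u0))
   <->
   (forall um up, Y um -> Y up ->
      lhsB omega g fnum Hnum um up = rhsB omega f F um up))
  /\
  (forall Fnum : 'cV[R]_n -> 'cV[R]_n -> R,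
      (forall u, Y u -> Fnum u u = F u) ->
      (forall um u0 up, Y um -> Y u0 -> Y up ->
         lhsA omega g fnum Hnum um u0 up = Fnum u0 up - Fnum um u0) ->
      forall um up, Y um -> Y up ->
        Fnum um up = Fnum_formula omega f F g fnum Hnum um up).
Proof.
set P := fun a b => dotv (omega a) (fnum a b) + 2^-1 * dotv (omega a) (Hnum a b *m (g b - g a)).
set Q := fun a b => dotv (omega b) (fnum a b) - 2^-1 * dotv (omega b) (Hnum a b *m (g b - g a)).
have eA : forall um u0 up, lhsA omega g fnum Hnum um u0 up = P u0 up - Q um u0.
  move=> um u0 up; rewrite /lhsA /P /Q; dsimpl.
ring.
have eB : forall a b, lhsB omega g fnum Hnum a b = Q a b - P a b.
  move=> a b; rewrite /lhsB /P /Q; dsimpl; ring.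
have eF : forall a b, Fnum_formula omega f F g fnum Hnum a b =
   2^-1 * (F a + F b) + 2^-1 * (P a b + Q a b) - 2^-1 * (dotv (omega a) (f a) + dotv (omega b) (f b)).
  move=> a b; rewrite /Fnum_formula /P /Q; dsimpl; field => //.
have Pu : forall u, Y u -> P u u = dotv (omega u) (f u).
  by move=> u Yu; rewrite /P hf // subrr mulmx0 dotv0r mulr0 addr0.
have Qu : forall u, Y u -> Q u u = dotv (omega u) (f u).
  by move=> u Yu; rewrite /Q hf // subrr mulmx0 dotv0r mulr0 subr0.
clearbody P Q.
split; last split.
- split.
  + move=> [Fn [hd hA]] a b Ya Yb; rewrite eB /rhsB.
    have h1 := hA a a b Ya Ya Yb; have h2 := hA a b b Ya Yb Yb.
    rewrite eA hd // Qu // in h1; rewrite eA hd // Pu // in h2. lra.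
  + move=> hB; exists (fun a b => P a b - dotv (omega a) (f a) + F a); split.
      by move=> u Yu; rewrite Pu // subrr add0r.
    move=> um u0 up Ym Y0 Yp; rewrite eA.
    have := hB um u0 Ym Y0; rewrite eB /rhsB; lra.
- split.
  + move=> [Fn [hd hA]] a b Ya Yb; rewrite eB /rhsB.
    have h1 := hA a a b Ya Ya Yb; have h2 := hA a b b Ya Yb Yb.
    rewrite eA hd // Qu // in h1; rewrite eA hd // Pu // in h2. lra.
  + move=> hB; exists (fun a b => P a b - dotv (omega a) (f a) + F a); split.
      by move=> u Yu; rewrite Pu // subrr add0r.
    move=> um u0 up Ym Y0 Yp; rewrite eA.
    have := hB um u0 Ym Y0; rewrite eB /rhsB; lra.
- move=> Fn hd hA a b Ya Yb; rewrite eF.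
  have h1 := hA a a b Ya Ya Yb; have h2 := hA a b b Ya Yb Yb.
  rewrite eA hd // Qu // in h1; rewrite eA hd // Pu // in h2. lra.
Qed.
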